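(* Let $\sigma$ be a nonempty finite sequence of nonnegative integers avoiding both patterns $010$ and $210$. Let $q$ be the largest value $\sigma_l$ of $\sigma$ such that there is $i<l$ with $\sigma_i>\sigma_l$, or $q=0$ if no such value exists (i.e. $\sigma$ is nondecreasing), and let $r$ be the number of distinct values of $\sigma$ that are $\geqslant q$. Then $\mathrm{forb}(\sigma,\{010,210\})=q+r$.
   Context: A sequence contains a pattern $p$ if some subsequence is order-isomorphic to $p$; otherwise it avoids $p$. Avoiding $010$: no $i<j<l$ with $\sigma_i=\sigma_l<\sigma_j$. Avoiding $210$: no $i<j<l$ with $\sigma_i>\sigma_j>\sigma_l$. For a sequence $\sigma$ avoiding a set of patterns $P$, a value $v\in\{0,\dots,\max(\sigma)\}$ is forbidden by $\sigma$ and $P$ if the sequence $\sigma\cdot (M,v)$ (σ followed by $M$ then $v$) contains some pattern of $P$, where $M>\max(\sigma)$; $\mathrm{forb}(\sigma,P)$ is the number of such forbidden values. *)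

(* Defs.v *)
From mathcomp Require Import all_boot.
Set Implicit Arguments. Unset Strict Implicit. Unset Printing Implicit Defensive.

Definition order_iso (t p : seq nat) : bool :=
  (size t == size p) &&
  [forall i : 'I_(size t), forall j : 'I_(size t),
     ((nth 0 t i < nth 0 t j) == (nth 0 p i < nth 0 p j)) &&
     ((nth 0 t i == nth 0 t j) == (nth 0 p i == nth 0 p j))].

(* subsequences of s are exactly the masks of s by bit-vectors of length size s *)
Definition contains (s p : seq nat) : bool :=
  [exists m : (size s).-tuple bool, order_iso (mask m s) p].

Definition avoids (s : seq nat) (P : seq (seq nat)) : Prop :=
  forall p, p \in P -> ~~ contains s p.

Definition p010 : seq nat := [:: 0; 1; 0].
Definition p210 : seq nat := [:: 2; 1; 0].

Definition seqmax (s : seq nat) : nat := \max_(x <- s) x.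

(* v is forbidden: s ++ [M; v] contains some pattern of P, with M > max s
   (we take M = max s + 1). *)
Definition forbidden (s : seq nat) (P : seq (seq nat)) (v : nat) : bool :=
  has (contains (s ++ [:: (seqmax s).+1; v])) P.

Definition forb (s : seq nat) (P : seq (seq nat)) : nat :=
  count (forbidden s P) (iota 0 (seqmax s).+1).

Definition qval (s : seq nat) : nat :=
  \max_(l < size s | [exists i : 'I_(size s), (i < l) && (nth 0 s l < nth 0 s i)])
     nth 0 s l.

Definition rval (s : seq nat) : nat :=
  size (undup [seq x <- s | qval s <= x]).

(* Main.v *)
Require Import Defs.
From mathcomp Require Import all_boot.
Set Implicit Arguments. Unset Strict Implicit. Unset Printing Implicit Defensive.

Lemma containsP t p : contains t p <-> exists u, subseq u t /\ order_iso u p.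
Proof.
split.
- case/existsP=> m H; exists (mask m t); split=> //; exact: mask_subseq.
- case=> u [/subseqP [m Hm ->] H]; apply/existsP.
  exists (@Tuple (size t) bool m (introT eqP Hm)); exact: H.
Qed.

Lemma iso_size u p : order_iso u p -> size u = size p.
Proof. by case/andP=> /eqP. Qed.

Lemma iso010 x y z : order_iso [:: x; y; z] p010 = (x == z) && (x < y).
Proof.
apply/idP/idP.
- case/andP=> _ /forallP H.
  have /forallP H0 := H ord0.
  have /andP[_ /eqP E] := H0 (@Ordinal 3 2 isT).
  have /andP[/eqP L _] := H0 (@Ordinal 3 1 isT).
  by rewrite /= in E L; rewrite E L.
- case/andP=> /eqP <- H; apply/andP; split => //.
  apply/forallP=> i; apply/forallP=> j.
  case: i j => [[|[|[|i]]] Hi] [[|[|[|j]]] Hj] //=;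
  by (rewrite ?ltnn ?eqxx /=; move: H; case: (ltngtP x y)).
Qed.

Lemma iso210 x y z : order_iso [:: x; y; z] p210 = (y < x) && (z < y).
Proof.
apply/idP/idP.
- case/andP=> _ /forallP H.
  have /forallP H0 := H (@Ordinal 3 1 isT).
  have /andP[/eqP L _] := H0 ord0.
  have /forallP H2 := H (@Ordinal 3 2 isT).
  have /andP[/eqP L2 _] := H2 (@Ordinal 3 1 isT).
  by rewrite /= in L L2; rewrite L L2.
- case/andP=> H1 H2; apply/andP; split => //.
  have H3 : z < x by exact: ltn_trans H2 H1.
  apply/forallP=> i; apply/forallP=> j.
  case: i j => [[|[|[|i]]] Hi] [[|[|[|j]]] Hj] //=;
  by (rewrite ?ltnn ?eqxx /=; move: H1 H2 H3; case: (ltngtP x y); case: (ltngtP y z); case: (ltngtP x z)).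
Qed.
Lemma idx_subseq (s : seq nat) i l : i < l -> l < size s ->
  subseq [:: nth 0 s i; nth 0 s l] s.
Proof.
elim: s i l => [|a s IH] i l Hil Hl; first by [].
case: l Hil Hl => [|l] // Hil Hl.
case: i Hil => [|i] Hil.
- by rewrite /= eqxx sub1seq mem_nth.
- apply: subseq_trans (subseq_cons s a); exact: IH.
Qed.

Lemma subseq_idx (s : seq nat) x y : subseq [:: x; y] s ->
  exists i l, [/\ i < l, l < size s, nth 0 s i = x & nth 0 s l = y].
Proof.
elim: s => [|a s IH] //=.
case: eqP => [->|_].
- rewrite sub1seq => Hy. exists 0, (index y s).+1; split => //=.
  + by rewrite ltnS index_mem.
  + exact: nth_index.
- case/IH => i [l [H1 H2 H3 H4]]; by exists i.+1, l.+1.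
Qed.

Lemma rev3 (s : seq nat) x y z M v : subseq [:: x; y; z] (s ++ [:: M; v]) ->
  [\/ [/\ z = v, y = M & x \in s], z = v /\ subseq [:: x; y] s,
      z = M /\ subseq [:: x; y] s | subseq [:: x; y; z] s].
Proof.
rewrite -subseq_rev rev_cat (_ : rev [:: M; v] = [:: v; M]) //.
rewrite (_ : rev [:: x; y; z] = [:: z; y; x]) //.
have R2 : forall a b, subseq [:: b; a] (rev s) = subseq [:: a; b] s.
  by move=> a b; rewrite -[RHS]subseq_rev.
have R3 : subseq [:: z; y; x] (rev s) = subseq [:: x; y; z] s.
  by rewrite -[RHS]subseq_rev.
case: (eqVneq z v) => [->|nzv].
- case: (eqVneq y M) => [->|nyM].
  + by rewrite /= !eqxx sub1seq mem_rev => H; apply: Or41.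
  + by rewrite /= eqxx (negbTE nyM) R2 => H; apply: Or42.
- case: (eqVneq z M) => [Ez|nzM].
  + rewrite Ez in nzv *.
    by rewrite /= (negbTE nzv) eqxx => H; apply: Or43; rewrite -R2.
  + by rewrite /= (negbTE nzv) (negbTE nzM) R3 => H; apply: Or44.
Qed.
Lemma mem_le_max (s : seq nat) x : x \in s -> x <= seqmax s.
Proof. by move=> H; rewrite /seqmax; apply: (leq_bigmax_seq (F := id) _ H). Qed.

Lemma qval_le (s : seq nat) : qval s <= seqmax s.
Proof. apply/bigmax_leqP => l _; apply: mem_le_max; exact: mem_nth. Qed.

Lemma desc_le_q (s : seq nat) i l : i < l -> l < size s ->
  nth 0 s l < nth 0 s i -> nth 0 s l <= qval s.
Proof.
move=> Hil Hl Hlt.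
have Hi : i < size s by exact: ltn_trans Hil Hl.
apply: (leq_bigmax_cond (F := fun l : 'I_(size s) => nth 0 s l) (Ordinal Hl)).
by apply/existsP; exists (Ordinal Hi); rewrite /= Hil Hlt.
Qed.

Lemma lt_q (s : seq nat) v : v < qval s ->
  exists i l, [/\ i < l, l < size s, nth 0 s l < nth 0 s i & v < nth 0 s l].
Proof.
move=> Hv.
case: (boolP [exists l : 'I_(size s), [exists i : 'I_(size s),
   (i < l) && (nth 0 s l < nth 0 s i)] && (v < nth 0 s l)]).
- case/existsP=> l /andP [/existsP [i /andP [H1 H2]] H3].
  by exists i, l; split.
- move=> Hn; exfalso; move: Hv; rewrite ltnNge => /negP; apply.
  apply/bigmax_leqP => l Hl; rewrite leqNgt; apply/negP => H.
  by move/negP: Hn; apply; apply/existsP; exists l; rewrite Hl H.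
Qed.

Lemma forbiddenE (s : seq nat) v : avoids s [:: p010; p210] ->
  forbidden s [:: p010; p210] v = (v \in s) || (v < qval s).
Proof.
move=> Hav.
have HM : forall x, x \in s -> x < (seqmax s).+1.
  by move=> x /mem_le_max.
apply/idP/idP.
- rewrite /forbidden /= orbF => /orP [] /containsP [u [Hsub Hiso]].
  + have := iso_size Hiso; case: u Hsub Hiso => [|x [|y [|z [|w u]]]] //= Hsub Hiso _.
    rewrite iso010 in Hiso; case/andP: Hiso => /eqP Exz Hxy.
    case: (rev3 Hsub).
    * by case=> Ez _ H; rewrite -Ez -Exz H.
    * by case=> Ez /mem_subseq H; rewrite -Ez -Exz H // inE eqxx.
    * case=> Ez /mem_subseq H; have := HM x (H x (mem_head _ _)).
      by rewrite Exz Ez ltnn.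
    * move=> H; exfalso; move/negP: (Hav p010 (mem_head _ _)); apply.
      by apply/containsP; exists [:: x; y; z]; split => //; rewrite iso010 Exz eqxx -Exz Hxy.
  + have := iso_size Hiso; case: u Hsub Hiso => [|x [|y [|z [|w u]]]] //= Hsub Hiso _.
    rewrite iso210 in Hiso; case/andP: Hiso => Hyx Hzy.
    case: (rev3 Hsub).
    * case=> _ Ey H; have := HM x H; rewrite -Ey => H2.
      by move: (ltn_trans H2 Hyx); rewrite ltnn.
    * case=> Ez /subseq_idx [i [l [H1 H2 H3 H4]]].
      apply/orP; right; rewrite -Ez; apply: (leq_trans Hzy).
      by rewrite -H4; apply: desc_le_q H1 H2 _; rewrite H3 H4.
    * case=> Ez /mem_subseq H; have := HM y (H y (ltac:(by rewrite !inE eqxx orbT))).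
      by rewrite -Ez => H2; move: (ltn_trans H2 Hzy); rewrite ltnn.
    * move=> H; exfalso; move/negP: (Hav p210 (ltac:(by rewrite !inE eqxx orbT))); apply.
      by apply/containsP; exists [:: x; y; z]; split => //; rewrite iso210 Hyx Hzy.
- rewrite /forbidden /= orbF => /orP [] H.
  + apply/orP; left; apply/containsP; exists [:: v; (seqmax s).+1; v]; split.
    * rewrite -cat1s; apply: cat_subseq; first by rewrite sub1seq.
      exact: subseq_refl.
    * by rewrite iso010 eqxx HM.
  + apply/orP; right; case: (lt_q H) => i [l [H1 H2 H3 H4]].
    apply/containsP; exists [:: nth 0 s i; nth 0 s l; v]; split.
    * rewrite -[[:: _; _; v]]/([:: nth 0 s i; nth 0 s l] ++ [:: v]).
      apply: cat_subseq; first exact: idx_subseq.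
      by rewrite sub1seq !inE eqxx orbT.
    * by rewrite iso210 H3 H4.
Qed.

Theorem mainTheorem8 (s : seq nat) :
  s != [::] ->
  avoids s [:: p010; p210] ->
  forb s [:: p010; p210] = qval s + rval s.
Proof.
move=> _ Hav; rewrite /forb (eq_count (a2 := fun v => (v \in s) || (v < qval s)));
  last by move=> v; rewrite forbiddenE.
have Hq : qval s <= (seqmax s).+1 by apply: leqW; exact: qval_le.
rewrite -(subnKC Hq) iotaD count_cat add0n.
congr (_ + _).
- rewrite (eq_in_count (a2 := predT)); first by rewrite count_predT size_iota.
  by move=> x; rewrite mem_iota /= add0n => ->; rewrite orbT.
- rewrite (eq_in_count (a2 := mem s)); last first.
    by move=> x; rewrite mem_iota => /andP [H _]; rewrite /= ltnNge H orbF.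
  rewrite -size_filter /rval; apply: perm_size; apply: uniq_perm.
  + by apply: filter_uniq; exact: iota_uniq.
  + exact: undup_uniq.
  + move=> x; rewrite mem_filter mem_iota mem_undup mem_filter subnKC //.
    apply/idP/idP => [/and3P [H1 H2 _] | /andP [H1 H2]].
    + by rewrite H2 /=; exact: H1.
    + by apply/and3P; split => //; rewrite ltnS; exact: mem_le_max.
Qed.
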